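(* Let $R$ be a commutative Noetherian ring and let $a_{ij},\ell_{ij}$ ($1\le i\le 2$, $1\le j\le 3$), $\psi_{12},\psi_{13},\psi_{23},z_1,z_2$ be elements of $R$. Let $\mathbb Q$ be the sequence of $R$-module homomorphisms $$0\to R^2\xrightarrow{q_3}R^6\xrightarrow{q_2}R^5\xrightarrow{q_1}R$$ given by the matrices described below. Then $\mathbb Q$ is a complex (i.e. $q_1q_2=0$ and $q_2q_3=0$). Furthermore, if the ideal of $R$ generated by the five entries of $q_1$ has grade at least three, then $\mathbb Q$ is acyclic (i.e. $\operatorname{H}_j(\mathbb Q)=0$ for $j\ge 1$).
   Context: Write $A=(a_{ij})$ and $L=(\ell_{ij})$ for the $2\times 3$ matrices, $P=(\psi_{23},-\psi_{13},\psi_{12})^{\rm T}$, $[ij|kl]_{a\ell}$ notation is avoided; instead write $N=\sum_{i=1}^3(a_{1i}\ell_{2i}-a_{2i}\ell_{1i})$. The $1\times 5$ matrix is $q_1=[\,g_1\ g_2\ g_3\ g_4\ g_5\,]$ with $g_1=-\det\begin{bmatrix}\psi_{23}&-\psi_{13}&\psi_{12}\\ \ell_{11}&\ell_{12}&\ell_{13}\\ \ell_{21}&\ell_{22}&\ell_{23}\end{bmatrix}-z_2N-z_2z_1$, $g_2=P^{\rm T}A^{\rm T}\begin{bmatrix}\ell_{21}\\-\ell_{11}\end{bmatrix}-z_2(a_{12}a_{23}-a_{13}a_{22})+z_1\psi_{23}$, $g_3=P^{\rm T}A^{\rm T}\begin{bmatrix}\ell_{22}\\-\ell_{12}\end{bmatrix}+z_2(a_{11}a_{23}-a_{13}a_{21})-z_1\psi_{13}$,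 $g_4=P^{\rm T}A^{\rm T}\begin{bmatrix}\ell_{23}\\-\ell_{13}\end{bmatrix}-z_2(a_{11}a_{22}-a_{12}a_{21})+z_1\psi_{12}$, $g_5=-\det(AL^{\rm T})-z_1N-z_1^2$. The $5\times 6$ matrix $q_2$ has columns $C_1,\dots,C_6$ (entries listed from row 1 to row 5): $C_1=(\psi_{12}a_{23}-\psi_{13}a_{22}+\psi_{23}a_{21},\ -\ell_{22}\psi_{12}-\ell_{23}\psi_{13}+z_2a_{21},\ \ell_{21}\psi_{12}-\ell_{23}\psi_{23}+z_2a_{22},\ \ell_{21}\psi_{13}+\ell_{22}\psi_{23}+z_2a_{23},\ 0)$; $C_2=(-\psi_{12}a_{13}+\psi_{13}a_{12}-\psi_{23}a_{11},\ \psi_{12}\ell_{12}+\psi_{13}\ell_{13}-z_2a_{11},\ -\psi_{12}\ell_{11}+\psi_{23}\ell_{13}-z_2a_{12},\ -\psi_{13}\ell_{11}-\psi_{23}\ell_{12}-z_2a_{13},\ 0)$; $C_3=(z_1,\ \ell_{12}\ell_{23}-\ell_{13}\ell_{22},\ -(\ell_{11}\ell_{23}-\ell_{13}\ell_{21}),\ \ell_{11}\ell_{22}-\ell_{12}\ell_{21},\ -z_2)$; $C_4=(a_{12}a_{23}-a_{13}a_{22},\ -(a_{12}\ell_{22}-a_{22}\ell_{12})-(a_{13}\ell_{23}-a_{23}\ell_{13})-z_1,\ a_{12}\ell_{21}-a_{22}\ell_{11},\ a_{13}\ell_{21}-a_{23}\ell_{11},\ -\psi_{23})$; $C_5=(-(a_{11}a_{23}-a_{13}a_{21}),\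 a_{11}\ell_{22}-a_{21}\ell_{12},\ -(a_{11}\ell_{21}-a_{21}\ell_{11})-(a_{13}\ell_{23}-a_{23}\ell_{13})-z_1,\ a_{13}\ell_{22}-a_{23}\ell_{12},\ \psi_{13})$; $C_6=(a_{11}a_{22}-a_{12}a_{21},\ a_{11}\ell_{23}-a_{21}\ell_{13},\ a_{12}\ell_{23}-a_{22}\ell_{13},\ -(a_{11}\ell_{21}-a_{21}\ell_{11})-(a_{12}\ell_{22}-a_{22}\ell_{12})-z_1,\ -\psi_{12})$. The $6\times 2$ matrix $q_3$ has rows (first column entry; second column entry): row 1: $a_{11}\ell_{11}+a_{12}\ell_{12}+a_{13}\ell_{13}$; $a_{11}\ell_{21}+a_{12}\ell_{22}+a_{13}\ell_{23}+z_1$; row 2: $a_{21}\ell_{11}+a_{22}\ell_{12}+a_{23}\ell_{13}-z_1$; $a_{21}\ell_{21}+a_{22}\ell_{22}+a_{23}\ell_{23}$; row 3: $-a_{11}\psi_{23}+a_{12}\psi_{13}-a_{13}\psi_{12}$; $-a_{21}\psi_{23}+a_{22}\psi_{13}-a_{23}\psi_{12}$; row 4: $-\ell_{12}\psi_{12}-\ell_{13}\psi_{13}+z_2a_{11}$; $-\ell_{22}\psi_{12}-\ell_{23}\psi_{13}+z_2a_{21}$; row 5: $\ell_{11}\psi_{12}-\ell_{13}\psi_{23}+z_2a_{12}$; $\ell_{21}\psi_{12}-\ell_{23}\psi_{23}+z_2a_{22}$; row 6: $\ell_{11}\psi_{13}+\ell_{12}\psi_{23}+z_2a_{13}$; $\ell_{21}\psi_{13}+\ell_{22}\psi_{23}+z_2a_{23}$.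 (This is the matrix form, with respect to fixed bases, of the paper's coordinate-free complex built from maps $\phi:F\to G$, $\ell:F^*\to G$, $\psi\in\bigwedge^2F^*$, $\zeta=z_1\beta_1\wedge\beta_2\in\bigwedge^2G$, $z_2\in R$ with $\operatorname{rank}F=3$, $\operatorname{rank}G=2$.) A complex $\cdots\to C_1\to C_0\to 0$ is acyclic if $\operatorname{H}_j=0$ for all $j\ge1$. *)

(* Defs.v *)
From HB Require Import structures.
From mathcomp Require Import all_boot all_order all_algebra.
Set Implicit Arguments. Unset Strict Implicit. Unset Printing Implicit Defensive.
Import GRing.Theory.
Local Open Scope ring_scope.

Section Defs.
Variable R : comPzRingType.

Definition in_ideal (s : seq R) (x : R) : Prop :=
  exists c : 'I_(size s) -> R, x = \sum_(i < size s) c i * s`_i.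

Definition is_ideal (I : R -> Prop) : Prop :=
  [/\ I 0, (forall x y, I x -> I y -> I (x + y)) & (forall r x, I x -> I (r * x))].

Definition noetherian : Prop :=
  forall I : R -> Prop, is_ideal I -> exists s : seq R, forall x, I x <-> in_ideal s x.

Definition weakly_regular (s : seq R) : Prop :=
  forall k : nat, (k < size s)%N ->
    forall y : R, in_ideal (take k s) (s`_k * y) -> in_ideal (take k s) y.

(** grade I >= n : I contains an R-regular sequence of length n
    (with the convention grade R = infinity, which is automatic here). *)
Definition grade_ge (I : R -> Prop) (n : nat) : Prop :=
  exists s : seq R, [/\ size s = n, (forall x, x \in s -> I x) & weakly_regular s].

Definition mxl (m n : nat) (s : seq (seq R)) : 'M[R]_(m, n) :=
  \matrix_(i < m, j < n) nth 0 (nth [::] s i) j.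

Definition acyclic3 (m0 m1 m2 m3 : nat) (d1 : 'M[R]_(m0, m1))
    (d2 : 'M[R]_(m1, m2)) (d3 : 'M[R]_(m2, m3)) : Prop :=
  [/\ (forall v : 'cV[R]_m1, d1 *m v = 0 -> exists w : 'cV[R]_m2, v = d2 *m w),
      (forall v : 'cV[R]_m2, d2 *m v = 0 -> exists w : 'cV[R]_m3, v = d3 *m w)
    & (forall v : 'cV[R]_m3, d3 *m v = 0 -> v = 0)].

Variables (a11 a12 a13 a21 a22 a23 l11 l12 l13 l21 l22 l23
           p12 p13 p23 z1 z2 : R).

Definition Amx : 'M[R]_(2, 3) := mxl 2 3 [:: [:: a11; a12; a13]; [:: a21; a22; a23]].
Definition Lmx : 'M[R]_(2, 3) := mxl 2 3 [:: [:: l11; l12; l13]; [:: l21; l22; l23]].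
Definition Pmx : 'cV[R]_3 := mxl 3 1 [:: [:: p23]; [:: - p13]; [:: p12]].
Definition Nq : R := (a11 * l21 - a21 * l11) + (a12 * l22 - a22 * l12) + (a13 * l23 - a23 * l13).

Definition PAv (u v : R) : R := ((Pmx^T *m Amx^T) *m mxl 2 1 [:: [:: u]; [:: v]]) ord0 ord0.

Definition g1 : R :=
  - \det (mxl 3 3 [:: [:: p23; - p13; p12]; [:: l11; l12; l13]; [:: l21; l22; l23]])
  - z2 * Nq - z2 * z1.
Definition g2 : R := PAv l21 (- l11) - z2 * (a12 * a23 - a13 * a22) + z1 * p23.
Definition g3 : R := PAv l22 (- l12) + z2 * (a11 * a23 - a13 * a21) - z1 * p13.
Definition g4 : R := PAv l23 (- l13) - z2 * (a11 * a22 - a12 * a21) + z1 * p12.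
Definition g5 : R := - \det (Amx *m Lmx^T) - z1 * Nq - z1 ^+ 2.

Definition q1 : 'M[R]_(1, 5) := mxl 1 5 [:: [:: g1; g2; g3; g4; g5]].

Definition q2 : 'M[R]_(5, 6) := (mxl 6 5 [::
  [:: p12 * a23 - p13 * a22 + p23 * a21;
      - l22 * p12 - l23 * p13 + z2 * a21;
      l21 * p12 - l23 * p23 + z2 * a22;
      l21 * p13 + l22 * p23 + z2 * a23; 0];
  [:: - p12 * a13 + p13 * a12 - p23 * a11;
      p12 * l12 + p13 * l13 - z2 * a11;
      - p12 * l11 + p23 * l13 - z2 * a12;
      - p13 * l11 - p23 * l12 - z2 * a13; 0];
  [:: z1; l12 * l23 - l13 * l22; - (l11 * l23 - l13 * l21); l11 * l22 - l12 * l21; - z2];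
  [:: a12 * a23 - a13 * a22;
      - (a12 * l22 - a22 * l12) - (a13 * l23 - a23 * l13) - z1;
      a12 * l21 - a22 * l11; a13 * l21 - a23 * l11; - p23];
  [:: - (a11 * a23 - a13 * a21); a11 * l22 - a21 * l12;
      - (a11 * l21 - a21 * l11) - (a13 * l23 - a23 * l13) - z1;
      a13 * l22 - a23 * l12; p13];
  [:: a11 * a22 - a12 * a21; a11 * l23 - a21 * l13; a12 * l23 - a22 * l13;
      - (a11 * l21 - a21 * l11) - (a12 * l22 - a22 * l12) - z1; - p12]])^T.

Definition q3 : 'M[R]_(6, 2) := mxl 6 2 [::
  [:: a11 * l11 + a12 * l12 + a13 * l13; a11 * l21 + a12 * l22 + a13 * l23 + z1];
  [:: a21 * l11 + a22 * l12 + a23 * l13 - z1; a21 * l21 + a22 * l22 + a23 * l23];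
  [:: - a11 * p23 + a12 * p13 - a13 * p12; - a21 * p23 + a22 * p13 - a23 * p12];
  [:: - l12 * p12 - l13 * p13 + z2 * a11; - l22 * p12 - l23 * p13 + z2 * a21];
  [:: l11 * p12 - l13 * p23 + z2 * a12; l21 * p12 - l23 * p23 + z2 * a22];
  [:: l11 * p13 + l12 * p23 + z2 * a13; l21 * p13 + l22 * p23 + z2 * a23]].

End Defs.

(* Main.v *)
Require Import Defs.
From HB Require Import structures.
From mathcomp Require Import all_boot all_order all_algebra.
From mathcomp Require Import ring.
Set Implicit Arguments. Unset Strict Implicit. Unset Printing Implicit Defensive.
Import GRing.Theory.
Local Open Scope ring_scope.
Section Abs.
End Abs.

Lemma sreg0 (R : comPzRingType) (x1 : R) s :
  weakly_regular (x1 :: s) -> forall y, x1 * y = 0 -> y = 0.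
Proof.
move=> W y Hy.
have [] := W 0%N erefl y.
  by exists (fun _ => 0); rewrite /= big_ord0.
by move=> c ->; rewrite big_ord0.
Qed.

Lemma sreg1 (R : comPzRingType) (x1 x2 : R) s :
  weakly_regular (x1 :: x2 :: s) -> forall y c, x2 * y = x1 * c -> exists c', y = x1 * c'.
Proof.
move=> W y c Hy.
have [] := W 1%N erefl y.
  by exists (fun _ => c); rewrite /= big_ord1 /= Hy mulrC.
by move=> c' ->; exists (c' 0); rewrite big_ord1 /= mulrC.
Qed.

Lemma sreg2 (R : comPzRingType) (x1 x2 x3 : R) s :
  weakly_regular (x1 :: x2 :: x3 :: s) -> forall y a b, x3 * y = x1 * a + x2 * b ->
  exists a' b', y = x1 * a' + x2 * b'.
Proof.
move=> W y a b Hy.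
have [] := W 2%N erefl y.
  exists (fun i : 'I_2 => if val i == 0%N then a else b).
  by rewrite /= big_ord_recr big_ord1 /= Hy [a * _]mulrC [b * _]mulrC.
move=> c ->; exists (c 0), (c 1); rewrite big_ord_recr big_ord1 /=.
by congr (_ + _); rewrite mulrC; congr (_ * _); congr c; apply/val_inj.

Qed.

Lemma vreg0 (R : comPzRingType) (x1 : R) s n (v : 'cV[R]_n) :
  weakly_regular (x1 :: s) -> x1 *: v = 0 -> v = 0.
Proof.
move=> W H; apply/matrixP => i j; rewrite mxE.
apply: (@sreg0 R x1 s W (v i j)).
by move/matrixP: H => /(_ i j); rewrite !mxE.
Qed.

Lemma vreg1 (R : comPzRingType) (x1 x2 : R) s n (v u : 'cV[R]_n) :
  weakly_regular (x1 :: x2 :: s) -> x2 *: v = x1 *: u -> exists u', v = x1 *: u'.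
Proof.
move=> W H.
have: forall i : 'I_n, exists c, v i 0 = x1 * c.
  move=> i; apply: (@sreg1 R x1 x2 s W (v i 0) (u i 0)).
  by move/matrixP: H => /(_ i 0); rewrite !mxE.
case/fin_all_exists => f Hf; exists (\col_i f i).
apply/matrixP => i j; rewrite !mxE ord1; exact: Hf.
Qed.

Lemma vreg2 (R : comPzRingType) (x1 x2 x3 : R) s n (v a b : 'cV[R]_n) :
  weakly_regular (x1 :: x2 :: x3 :: s) -> x3 *: v = x1 *: a + x2 *: b ->
  exists a' b', v = x1 *: a' + x2 *: b'.
Proof.
move=> W H.
have: forall i : 'I_n, exists c : R * R, v i 0 = x1 * c.1 + x2 * c.2.
  move=> i; case: (@sreg2 R x1 x2 x3 s W (v i 0) (a i 0) (b i 0)).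
    by move/matrixP: H => /(_ i 0); rewrite !mxE.
  by move=> a' [b' E]; exists (a', b').
case/fin_all_exists => f Hf; exists (\col_i (f i).1), (\col_i (f i).2).
apply/matrixP => i j; rewrite !mxE ord1; exact: Hf.
Qed.

Definition ann (R : comPzRingType) m0 m1 m2 m3 (d1 : 'M[R]_(m0, m1))
    (d2 : 'M[R]_(m1, m2)) (d3 : 'M[R]_(m2, m3)) (x : R) : Prop :=
  [/\ (forall v : 'cV_m3, d3 *m v = 0 -> x *: v = 0),
      (forall v : 'cV_m2, d2 *m v = 0 -> exists w, x *: v = d3 *m w)
    & (forall v : 'cV_m1, d1 *m v = 0 -> exists w, x *: v = d2 *m w)].

Lemma abstract_acyclic (R : comPzRingType) m0 m1 m2 m3 (d1 : 'M[R]_(m0, m1))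
    (d2 : 'M[R]_(m1, m2)) (d3 : 'M[R]_(m2, m3)) (x1 x2 x3 : R) :
  d1 *m d2 = 0 -> d2 *m d3 = 0 -> weakly_regular [:: x1; x2; x3] ->
  ann d1 d2 d3 x1 -> ann d1 d2 d3 x2 -> ann d1 d2 d3 x3 ->
  acyclic3 d1 d2 d3.
Proof.
move=> d12 d23 W [A31 A21 A11] [A32 A22 A12] [A33 A23 A13].
have H3 : forall v : 'cV_m3, d3 *m v = 0 -> v = 0.
  by move=> v Hv; exact: (vreg0 W (A31 v Hv)).
have H2 : forall v : 'cV_m2, d2 *m v = 0 -> exists w, v = d3 *m w.
  move=> v Hv; have [w1 E1] := A21 v Hv; have [w2 E2] := A22 v Hv.
  have E : x2 *: w1 = x1 *: w2.
    apply/eqP; rewrite -subr_eq0; apply/eqP; apply: H3.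
    by rewrite mulmxBr -!scalemxAr -E1 -E2 !scalerA mulrC subrr.
  have [u Eu] := vreg1 W E.
  exists u; apply/eqP; rewrite -subr_eq0; apply/eqP; apply: (vreg0 W); apply/eqP; rewrite scalerBr subr_eq0; apply/eqP.
  by rewrite E1 Eu scalemxAr.
split=> //.
move=> v Hv; have [w1 E1] := A11 v Hv; have [w2 E2] := A12 v Hv.
have [t Et] : exists t, x2 *: w1 - x1 *: w2 = d3 *m t.
  apply: H2; rewrite mulmxBr -!scalemxAr -E1 -E2 !scalerA mulrC subrr //.
have [t1 [t2 Et12]] : exists t1 t2, t = x1 *: t1 + x2 *: t2.
  set a := - w2; set b := w1.
  have Eab : d3 *m t = x1 *: a + x2 *: b by rewrite -Et /a /b scalerN addrC.
  have Z : x1 *: (d2 *m a) + x2 *: (d2 *m b) = 0.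
    by rewrite !scalemxAr -mulmxDr -Eab mulmxA d23 mul0mx.
  have [c Ec] : exists c, d2 *m b = x1 *: c.
    apply: (@vreg1 _ x1 x2 _ _ _ (- (d2 *m a)) W).
    by apply/eqP; rewrite scalerN -addr_eq0 addrC Z.
  have Ea : d2 *m a = - (x2 *: c).
    apply/eqP; rewrite -addr_eq0; apply/eqP; apply: (vreg0 W).
    by rewrite scalerDr scalerA mulrC -scalerA -Ec Z.
  have Hc : d1 *m c = 0.
    apply: (vreg0 W); rewrite scalemxAr -Ec mulmxA d12 mul0mx //.
  have [e Ee] := A13 c Hc.
  have [f Ef] : exists f, x3 *: b - x1 *: e = d3 *m f.
    apply: H2; rewrite mulmxBr -!scalemxAr Ec -Ee !scalerA mulrC subrr //.
  have [f' Ef'] : exists f', x3 *: a + x2 *: e = d3 *m f'.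
    apply: H2; rewrite mulmxDr -!scalemxAr Ea -Ee scalerN !scalerA mulrC addNr //.
  have E3 : x3 *: t = x1 *: f' + x2 *: f.
    apply/eqP; rewrite -subr_eq0; apply/eqP; apply: H3.
    rewrite mulmxBr mulmxDr -!scalemxAr -Ef -Ef' Eab.
    by apply/matrixP => i j; rewrite !mxE; ring.
  exact: (vreg2 W E3).
have E : x2 *: (w1 - d3 *m t2) = x1 *: (w2 + d3 *m t1).
  apply/eqP; rewrite -subr_eq0; apply/eqP.
  transitivity (x2 *: w1 - x1 *: w2 - (x2 *: (d3 *m t2) + x1 *: (d3 *m t1))).
    set A := d3 *m t1; set B := d3 *m t2.
    by apply/matrixP => i j; rewrite !mxE; ring.
  rewrite Et Et12 mulmxDr -!scalemxAr.
  set A := d3 *m t1; set B := d3 *m t2.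
  by apply/matrixP => i j; rewrite !mxE; ring.
have [u Eu] := vreg1 W E.
exists (u + d3 *m t2).
apply/eqP; rewrite -subr_eq0; apply/eqP; apply: (vreg0 W); apply/eqP; rewrite scalerBr subr_eq0; apply/eqP.
by rewrite E1 mulmxDr mulmxA d23 mul0mx addr0 scalemxAr -Eu mulmxBr mulmxA d23 mul0mx subr0.
Qed.

Lemma ann_of_hom (R : comPzRingType) m0 m1 m2 m3 (d1 : 'M[R]_(m0, m1))
    (d2 : 'M[R]_(m1, m2)) (d3 : 'M[R]_(m2, m3)) (x : R)
    (S0 : 'M[R]_(m1, m0)) (S1 : 'M[R]_(m2, m1)) (S2 : 'M[R]_(m3, m2)) :
  S2 *m d3 = x *: 1%:M -> d3 *m S2 + S1 *m d2 = x *: 1%:M ->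
  d2 *m S1 + S0 *m d1 = x *: 1%:M -> ann d1 d2 d3 x.
Proof.
move=> HA HB HC; split.
- move=> v Hv; rewrite -{1}[v]mul1mx scalemxAl -HA -mulmxA Hv mulmx0 //.
- move=> v Hv; exists (S2 *m v).
  by rewrite -{1}[v]mul1mx scalemxAl -HB mulmxDl -!mulmxA Hv mulmx0 addr0.
- move=> v Hv; exists (S1 *m v).
  by rewrite -{1}[v]mul1mx scalemxAl -HC mulmxDl -!mulmxA Hv mulmx0 addr0.
Qed.

Lemma ann0 (R : comPzRingType) m0 m1 m2 m3 (d1 : 'M[R]_(m0, m1))
    (d2 : 'M[R]_(m1, m2)) (d3 : 'M[R]_(m2, m3)) : ann d1 d2 d3 0.
Proof.
split.
- by move=> v _; rewrite scale0r.
- by move=> v _; exists 0; rewrite scale0r mulmx0.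
- by move=> v _; exists 0; rewrite scale0r mulmx0.
Qed.

Lemma annD (R : comPzRingType) m0 m1 m2 m3 (d1 : 'M[R]_(m0, m1))
    (d2 : 'M[R]_(m1, m2)) (d3 : 'M[R]_(m2, m3)) x y :
  ann d1 d2 d3 x -> ann d1 d2 d3 y -> ann d1 d2 d3 (x + y).
Proof.
move=> [A B C] [A' B' C']; split.
- by move=> v Hv; rewrite scalerDl A // A' // addr0.
- move=> v Hv; have [w Ew] := B v Hv; have [w' Ew'] := B' v Hv.
  by exists (w + w'); rewrite scalerDl Ew Ew' mulmxDr.
- move=> v Hv; have [w Ew] := C v Hv; have [w' Ew'] := C' v Hv.
  by exists (w + w'); rewrite scalerDl Ew Ew' mulmxDr.
Qed.

Lemma annM (R : comPzRingType) m0 m1 m2 m3 (d1 : 'M[R]_(m0, m1))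
    (d2 : 'M[R]_(m1, m2)) (d3 : 'M[R]_(m2, m3)) c x :
  ann d1 d2 d3 x -> ann d1 d2 d3 (c * x).
Proof.
move=> [A B C]; split.
- by move=> v Hv; rewrite -scalerA A // scaler0.
- move=> v Hv; have [w Ew] := B v Hv.
  by exists (c *: w); rewrite -scalerA Ew scalemxAr.
- move=> v Hv; have [w Ew] := C v Hv.
  by exists (c *: w); rewrite -scalerA Ew scalemxAr.
Qed.

Lemma det3 (R : comPzRingType) (x11 x12 x13 x21 x22 x23 x31 x32 x33 : R) :
  \det (mxl 3 3 [:: [:: x11; x12; x13]; [:: x21; x22; x23]; [:: x31; x32; x33]]) =
  x11 * x22 * x33 + x12 * x23 * x31 + x13 * x21 * x32 - x13 * x22 * x31 - x11 * x23 * x32 - x12 * x21 * x33.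
Proof.
rewrite (expand_det_row _ 0) /cofactor !big_ord_recr !big_ord0 /=.
rewrite !(expand_det_row _ 0) /cofactor !big_ord_recr !big_ord0 /=.
rewrite !det_mx11 !mxE /=.
ring.
Qed.

Lemma det2 (R : comPzRingType) (A : 'M[R]_2) : \det A = A 0 0 * A 1 1 - A 0 1 * A 1 0.
Proof.
rewrite (expand_det_row _ 0) /cofactor !big_ord_recr !big_ord0 /=.
rewrite !det_mx11 !mxE /=.
have -> : widen_ord (leqnSn 1) ord_max = 0 :> 'I_2 by apply/val_inj.
have -> : lift 0 (0 : 'I_1) = 1 :> 'I_2 by apply/val_inj.
have -> : lift ord_max (0 : 'I_1) = 0 :> 'I_2 by apply/val_inj.
have -> : ord_max = 1 :> 'I_2 by apply/val_inj.
rewrite /= expr0 expr1; ring.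
Qed.

Ltac crunch := rewrite ?mxE ?big_ord_recr ?big_ord0 /=.
Lemma Q1E (R : comPzRingType) (a11 a12 a13 a21 a22 a23 l11 l12 l13 l21 l22 l23 p12 p13 p23 z1 z2 : R) : q1 a11 a12 a13 a21 a22 a23 l11 l12 l13 l21 l22 l23 p12 p13 p23 z1 z2 = mxl 1 5 [:: [:: (- z1 * z2 + l13 * l22 * p23 + l13 * l21 * p13 - l12 * l23 * p23 + l12 * l21 * p12 - l11 * l23 * p13 - l11 * l22 * p12 + a23 * l13 * z2 + a22 * l12 * z2 + a21 * l11 * z2 - a13 * l23 * z2 - a12 * l22 * z2 - a11 * l21 * z2); (p23 * z1 - a23 * l11 * p12 + a22 * l11 * p13 - a21 * l11 * p23 + a13 * l21 * p12 + a13 * a22 * z2 - a12 * l21 * p13 - a12 * a23 * z2 + a11 * l21 * p23); (- p13 * z1 - a23 * l12 * p12 + a22 * l12 * p13 - a21 * l12 * p23 + a13 * l22 * p12 - a13 * a21 * z2 - a12 * l22 * p13 + a11 * l22 * p23 + a11 * a23 * z2); (p12 * z1 - a23 * l13 * p12 + a22 * l13 * p13 - a21 * l13 * p23 + a13 * l23 * p12 - a12 * l23 * p13 + a12 * a21 * z2 + a11 * l23 * p23 - a11 * a22 * z2); (- z1 * z1 + a23 * l13 * z1 + a22 * l12 * z1 + a21 * l11 * z1 - a13 * l23 * z1 - a13 * a22 * l13 * l22 + a13 * a22 * l12 * l23 - a13 * a21 * l13 * l21 + a13 * a21 * l11 * l23 - a12 * l22 * z1 + a12 * a23 * l13 * l22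 - a12 * a23 * l12 * l23 - a12 * a21 * l12 * l21 + a12 * a21 * l11 * l22 - a11 * l21 * z1 + a11 * a23 * l13 * l21 - a11 * a23 * l11 * l23 + a11 * a22 * l12 * l21 - a11 * a22 * l11 * l22)]].
Proof.
 rewrite /q1 /g1 /g2 /g3 /g4 /g5 /PAv /Pmx /Amx /Lmx /Nq det3 det2; do 4 crunch.
 congr (mxl _ _ [:: [:: _; _; _; _; _]]); ring.
Qed.

Ltac ordcase i := let Hi := fresh "H" in case: i => [[|[|[|[|[|[|?]]]]]] Hi] //=.
Lemma homA0 (R : comPzRingType) (a11 a12 a13 a21 a22 a23 l11 l12 l13 l21 l22 l23 p12 p13 p23 z1 z2 : R) :
  mxl 2 6 [:: [:: 0; (z2); 0; (- l21); (- l22); (- l23)];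
    [:: (- z2); 0; 0; (l11); (l12); (l13)]] *m q3 a11 a12 a13 a21 a22 a23 l11 l12 l13 l21 l22 l23 p12 p13 p23 z1 z2 = (- z1 * z2 + l13 * l22 * p23 + l13 * l21 * p13 - l12 * l23 * p23 + l12 * l21 * p12 - l11 * l23 * p13 - l11 * l22 * p12 + a23 * l13 * z2 + a22 * l12 * z2 + a21 * l11 * z2 - a13 * l23 * z2 - a12 * l22 * z2 - a11 * l21 * z2) *: 1%:M.
Proof. apply/matrixP => i j; rewrite /q3 /mxl; crunch; ordcase i; ordcase j; crunch; ring. Qed.

Lemma homB0 (R : comPzRingType) (a11 a12 a13 a21 a22 a23 l11 l12 l13 l21 l22 l23 p12 p13 p23 z1 z2 : R) :
  q3 a11 a12 a13 a21 a22 a23 l11 l12 l13 l21 l22 l23 p12 p13 p23 z1 z2 *m mxl 2 6 [:: [:: 0; (z2); 0; (- l21); (- l22); (- l23)];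
    [:: (- z2); 0; 0; (l11); (l12); (l13)]] + mxl 6 5 [:: [:: 0; (l11); (l12); (l13); 0];
    [:: 0; (l21); (l22); (l23); 0];
    [:: 0; (- p23); (p13); (- p12); (z1 - a23 * l13 - a22 * l12 - a21 * l11 + a13 * l23 + a12 * l22 + a11 * l21)];
    [:: 0; (z2); 0; 0; (- l13 * l22 + l12 * l23)];
    [:: 0; 0; (z2); 0; (l13 * l21 - l11 * l23)];
    [:: 0; 0; 0; (z2); (- l12 * l21 + l11 * l22)]] *m q2 a11 a12 a13 a21 a22 a23 l11 l12 l13 l21 l22 l23 p12 p13 p23 z1 z2 = (- z1 * z2 + l13 * l22 * p23 + l13 * l21 * p13 - l12 * l23 * p23 + l12 * l21 * p12 - l11 * l23 * p13 - l11 * l22 * p12 + a23 * l13 * z2 + a22 * l12 * z2 + a21 * l11 * z2 - a13 * l23 * z2 - a12 * l22 * z2 - a11 * l21 * z2) *: 1%:M.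
Proof. apply/matrixP => i j; rewrite /q3 /q2 /mxl; crunch; ordcase i; ordcase j; crunch; ring. Qed.

Lemma homC0 (R : comPzRingType) (a11 a12 a13 a21 a22 a23 l11 l12 l13 l21 l22 l23 p12 p13 p23 z1 z2 : R) :
  q2 a11 a12 a13 a21 a22 a23 l11 l12 l13 l21 l22 l23 p12 p13 p23 z1 z2 *m mxl 6 5 [:: [:: 0; (l11); (l12); (l13); 0];
    [:: 0; (l21); (l22); (l23); 0];
    [:: 0; (- p23); (p13); (- p12); (z1 - a23 * l13 - a22 * l12 - a21 * l11 + a13 * l23 + a12 * l22 + a11 * l21)];
    [:: 0; (z2); 0; 0; (- l13 * l22 + l12 * l23)];
    [:: 0; 0; (z2); 0; (l13 * l21 - l11 * l23)];
    [:: 0; 0; 0; (z2); (- l12 * l21 + l11 * l22)]] + mxl 5 1 [:: [:: (1)];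
    [:: 0];
    [:: 0];
    [:: 0];
    [:: 0]] *m q1 a11 a12 a13 a21 a22 a23 l11 l12 l13 l21 l22 l23 p12 p13 p23 z1 z2 = (- z1 * z2 + l13 * l22 * p23 + l13 * l21 * p13 - l12 * l23 * p23 + l12 * l21 * p12 - l11 * l23 * p13 - l11 * l22 * p12 + a23 * l13 * z2 + a22 * l12 * z2 + a21 * l11 * z2 - a13 * l23 * z2 - a12 * l22 * z2 - a11 * l21 * z2) *: 1%:M.
Proof. apply/matrixP => i j; rewrite Q1E /q2 /mxl; crunch; ordcase i; ordcase j; crunch; ring. Qed.
Lemma homA1 (R : comPzRingType) (a11 a12 a13 a21 a22 a23 l11 l12 l13 l21 l22 l23 p12 p13 p23 z1 z2 : R) :
  mxl 2 6 [:: [:: 0; (- p23); (- l21); 0; (- a23); (a22)];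
    [:: (p23); 0; (l11); 0; (a13); (- a12)]] *m q3 a11 a12 a13 a21 a22 a23 l11 l12 l13 l21 l22 l23 p12 p13 p23 z1 z2 = (p23 * z1 - a23 * l11 * p12 + a22 * l11 * p13 - a21 * l11 * p23 + a13 * l21 * p12 + a13 * a22 * z2 - a12 * l21 * p13 - a12 * a23 * z2 + a11 * l21 * p23) *: 1%:M.
Proof. apply/matrixP => i j; rewrite /q3 /mxl; crunch; ordcase i; ordcase j; crunch; ring. Qed.

Lemma homB1 (R : comPzRingType) (a11 a12 a13 a21 a22 a23 l11 l12 l13 l21 l22 l23 p12 p13 p23 z1 z2 : R) :
  q3 a11 a12 a13 a21 a22 a23 l11 l12 l13 l21 l22 l23 p12 p13 p23 z1 z2 *m mxl 2 6 [:: [:: 0; (- p23); (- l21); 0; (- a23); (a22)];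
    [:: (p23); 0; (l11); 0; (a13); (- a12)]] + mxl 6 5 [:: [:: (- l11); 0; (a13); (- a12); 0];
    [:: (- l21); 0; (a23); (- a22); 0];
    [:: (p23); 0; 0; 0; (- a13 * a22 + a12 * a23)];
    [:: (- z2); 0; (- p13); (p12); (- z1 + a21 * l11 - a11 * l21)];
    [:: 0; 0; (- p23); 0; (a22 * l11 - a12 * l21)];
    [:: 0; 0; 0; (- p23); (a23 * l11 - a13 * l21)]] *m q2 a11 a12 a13 a21 a22 a23 l11 l12 l13 l21 l22 l23 p12 p13 p23 z1 z2 = (p23 * z1 - a23 * l11 * p12 + a22 * l11 * p13 - a21 * l11 * p23 + a13 * l21 * p12 + a13 * a22 * z2 - a12 * l21 * p13 - a12 * a23 * z2 + a11 * l21 * p23) *: 1%:M.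
Proof. apply/matrixP => i j; rewrite /q3 /q2 /mxl; crunch; ordcase i; ordcase j; crunch; ring. Qed.

Lemma homC1 (R : comPzRingType) (a11 a12 a13 a21 a22 a23 l11 l12 l13 l21 l22 l23 p12 p13 p23 z1 z2 : R) :
  q2 a11 a12 a13 a21 a22 a23 l11 l12 l13 l21 l22 l23 p12 p13 p23 z1 z2 *m mxl 6 5 [:: [:: (- l11); 0; (a13); (- a12); 0];
    [:: (- l21); 0; (a23); (- a22); 0];
    [:: (p23); 0; 0; 0; (- a13 * a22 + a12 * a23)];
    [:: (- z2); 0; (- p13); (p12); (- z1 + a21 * l11 - a11 * l21)];
    [:: 0; 0; (- p23); 0; (a22 * l11 - a12 * l21)];
    [:: 0; 0; 0; (- p23); (a23 * l11 - a13 * l21)]] + mxl 5 1 [:: [:: 0];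
    [:: (1)];
    [:: 0];
    [:: 0];
    [:: 0]] *m q1 a11 a12 a13 a21 a22 a23 l11 l12 l13 l21 l22 l23 p12 p13 p23 z1 z2 = (p23 * z1 - a23 * l11 * p12 + a22 * l11 * p13 - a21 * l11 * p23 + a13 * l21 * p12 + a13 * a22 * z2 - a12 * l21 * p13 - a12 * a23 * z2 + a11 * l21 * p23) *: 1%:M.
Proof. apply/matrixP => i j; rewrite Q1E /q2 /mxl; crunch; ordcase i; ordcase j; crunch; ring. Qed.
Lemma homA2 (R : comPzRingType) (a11 a12 a13 a21 a22 a23 l11 l12 l13 l21 l22 l23 p12 p13 p23 z1 z2 : R) :
  mxl 2 6 [:: [:: 0; (p13); (- l22); (a23); 0; (- a21)];
    [:: (- p13); 0; (l12); (- a13); 0; (a11)]] *m q3 a11 a12 a13 a21 a22 a23 l11 l12 l13 l21 l22 l23 p12 p13 p23 z1 z2 = (- p13 * z1 - a23 * l12 * p12 + a22 * l12 * p13 - a21 * l12 * p23 + a13 * l22 * p12 - a13 * a21 * z2 - a12 * l22 * p13 + a11 * l22 * p23 + a11 * a23 * z2) *: 1%:M.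
Proof. apply/matrixP => i j; rewrite /q3 /mxl; crunch; ordcase i; ordcase j; crunch; ring. Qed.

Lemma homB2 (R : comPzRingType) (a11 a12 a13 a21 a22 a23 l11 l12 l13 l21 l22 l23 p12 p13 p23 z1 z2 : R) :
  q3 a11 a12 a13 a21 a22 a23 l11 l12 l13 l21 l22 l23 p12 p13 p23 z1 z2 *m mxl 2 6 [:: [:: 0; (p13); (- l22); (a23); 0; (- a21)];
    [:: (- p13); 0; (l12); (- a13); 0; (a11)]] + mxl 6 5 [:: [:: (- l12); (- a13); 0; (a11); 0];
    [:: (- l22); (- a23); 0; (a21); 0];
    [:: (- p13); 0; 0; 0; (a13 * a21 - a11 * a23)];
    [:: 0; (p13); 0; 0; (a21 * l12 - a11 * l22)];
    [:: (- z2); (p23); 0; (p12); (- z1 + a22 * l12 - a12 * l22)];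
    [:: 0; 0; 0; (p13); (a23 * l12 - a13 * l22)]] *m q2 a11 a12 a13 a21 a22 a23 l11 l12 l13 l21 l22 l23 p12 p13 p23 z1 z2 = (- p13 * z1 - a23 * l12 * p12 + a22 * l12 * p13 - a21 * l12 * p23 + a13 * l22 * p12 - a13 * a21 * z2 - a12 * l22 * p13 + a11 * l22 * p23 + a11 * a23 * z2) *: 1%:M.
Proof. apply/matrixP => i j; rewrite /q3 /q2 /mxl; crunch; ordcase i; ordcase j; crunch; ring. Qed.

Lemma homC2 (R : comPzRingType) (a11 a12 a13 a21 a22 a23 l11 l12 l13 l21 l22 l23 p12 p13 p23 z1 z2 : R) :
  q2 a11 a12 a13 a21 a22 a23 l11 l12 l13 l21 l22 l23 p12 p13 p23 z1 z2 *m mxl 6 5 [:: [:: (- l12); (- a13); 0; (a11); 0];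
    [:: (- l22); (- a23); 0; (a21); 0];
    [:: (- p13); 0; 0; 0; (a13 * a21 - a11 * a23)];
    [:: 0; (p13); 0; 0; (a21 * l12 - a11 * l22)];
    [:: (- z2); (p23); 0; (p12); (- z1 + a22 * l12 - a12 * l22)];
    [:: 0; 0; 0; (p13); (a23 * l12 - a13 * l22)]] + mxl 5 1 [:: [:: 0];
    [:: 0];
    [:: (1)];
    [:: 0];
    [:: 0]] *m q1 a11 a12 a13 a21 a22 a23 l11 l12 l13 l21 l22 l23 p12 p13 p23 z1 z2 = (- p13 * z1 - a23 * l12 * p12 + a22 * l12 * p13 - a21 * l12 * p23 + a13 * l22 * p12 - a13 * a21 * z2 - a12 * l22 * p13 + a11 * l22 * p23 + a11 * a23 * z2) *: 1%:M.
Proof. apply/matrixP => i j; rewrite Q1E /q2 /mxl; crunch; ordcase i; ordcase j; crunch; ring. Qed.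
Lemma homA3 (R : comPzRingType) (a11 a12 a13 a21 a22 a23 l11 l12 l13 l21 l22 l23 p12 p13 p23 z1 z2 : R) :
  mxl 2 6 [:: [:: 0; (- p12); (- l23); (- a22); (a21); 0];
    [:: (p12); 0; (l13); (a12); (- a11); 0]] *m q3 a11 a12 a13 a21 a22 a23 l11 l12 l13 l21 l22 l23 p12 p13 p23 z1 z2 = (p12 * z1 - a23 * l13 * p12 + a22 * l13 * p13 - a21 * l13 * p23 + a13 * l23 * p12 - a12 * l23 * p13 + a12 * a21 * z2 + a11 * l23 * p23 - a11 * a22 * z2) *: 1%:M.
Proof. apply/matrixP => i j; rewrite /q3 /mxl; crunch; ordcase i; ordcase j; crunch; ring. Qed.

Lemma homB3 (R : comPzRingType) (a11 a12 a13 a21 a22 a23 l11 l12 l13 l21 l22 l23 p12 p13 p23 z1 z2 : R) :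
  q3 a11 a12 a13 a21 a22 a23 l11 l12 l13 l21 l22 l23 p12 p13 p23 z1 z2 *m mxl 2 6 [:: [:: 0; (- p12); (- l23); (- a22); (a21); 0];
    [:: (p12); 0; (l13); (a12); (- a11); 0]] + mxl 6 5 [:: [:: (- l13); (a12); (- a11); 0; 0];
    [:: (- l23); (a22); (- a21); 0; 0];
    [:: (p12); 0; 0; 0; (- a12 * a21 + a11 * a22)];
    [:: 0; (- p12); 0; 0; (a21 * l13 - a11 * l23)];
    [:: 0; 0; (- p12); 0; (a22 * l13 - a12 * l23)];
    [:: (- z2); (p23); (- p13); 0; (- z1 + a23 * l13 - a13 * l23)]] *m q2 a11 a12 a13 a21 a22 a23 l11 l12 l13 l21 l22 l23 p12 p13 p23 z1 z2 = (p12 * z1 - a23 * l13 * p12 + a22 * l13 * p13 - a21 * l13 * p23 + a13 * l23 * p12 - a12 * l23 * p13 + a12 * a21 * z2 + a11 * l23 * p23 - a11 * a22 * z2) *: 1%:M.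
Proof. apply/matrixP => i j; rewrite /q3 /q2 /mxl; crunch; ordcase i; ordcase j; crunch; ring. Qed.

Lemma homC3 (R : comPzRingType) (a11 a12 a13 a21 a22 a23 l11 l12 l13 l21 l22 l23 p12 p13 p23 z1 z2 : R) :
  q2 a11 a12 a13 a21 a22 a23 l11 l12 l13 l21 l22 l23 p12 p13 p23 z1 z2 *m mxl 6 5 [:: [:: (- l13); (a12); (- a11); 0; 0];
    [:: (- l23); (a22); (- a21); 0; 0];
    [:: (p12); 0; 0; 0; (- a12 * a21 + a11 * a22)];
    [:: 0; (- p12); 0; 0; (a21 * l13 - a11 * l23)];
    [:: 0; 0; (- p12); 0; (a22 * l13 - a12 * l23)];
    [:: (- z2); (p23); (- p13); 0; (- z1 + a23 * l13 - a13 * l23)]] + mxl 5 1 [:: [:: 0];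
    [:: 0];
    [:: 0];
    [:: (1)];
    [:: 0]] *m q1 a11 a12 a13 a21 a22 a23 l11 l12 l13 l21 l22 l23 p12 p13 p23 z1 z2 = (p12 * z1 - a23 * l13 * p12 + a22 * l13 * p13 - a21 * l13 * p23 + a13 * l23 * p12 - a12 * l23 * p13 + a12 * a21 * z2 + a11 * l23 * p23 - a11 * a22 * z2) *: 1%:M.
Proof. apply/matrixP => i j; rewrite Q1E /q2 /mxl; crunch; ordcase i; ordcase j; crunch; ring. Qed.
Lemma homA4 (R : comPzRingType) (a11 a12 a13 a21 a22 a23 l11 l12 l13 l21 l22 l23 p12 p13 p23 z1 z2 : R) :
  mxl 2 6 [:: [:: (- a23 * l23 - a22 * l22 - a21 * l21); (z1 + a13 * l23 + a12 * l22 + a11 * l21); 0; 0; 0; 0];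
    [:: (- z1 + a23 * l13 + a22 * l12 + a21 * l11); (- a13 * l13 - a12 * l12 - a11 * l11); 0; 0; 0; 0]] *m q3 a11 a12 a13 a21 a22 a23 l11 l12 l13 l21 l22 l23 p12 p13 p23 z1 z2 = (- z1 * z1 + a23 * l13 * z1 + a22 * l12 * z1 + a21 * l11 * z1 - a13 * l23 * z1 - a13 * a22 * l13 * l22 + a13 * a22 * l12 * l23 - a13 * a21 * l13 * l21 + a13 * a21 * l11 * l23 - a12 * l22 * z1 + a12 * a23 * l13 * l22 - a12 * a23 * l12 * l23 - a12 * a21 * l12 * l21 + a12 * a21 * l11 * l22 - a11 * l21 * z1 + a11 * a23 * l13 * l21 - a11 * a23 * l11 * l23 + a11 * a22 * l12 * l21 - a11 * a22 * l11 * l22) *: 1%:M.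
Proof. apply/matrixP => i j; rewrite /q3 /mxl; crunch; ordcase i; ordcase j; crunch; ring. Qed.

Lemma homB4 (R : comPzRingType) (a11 a12 a13 a21 a22 a23 l11 l12 l13 l21 l22 l23 p12 p13 p23 z1 z2 : R) :
  q3 a11 a12 a13 a21 a22 a23 l11 l12 l13 l21 l22 l23 p12 p13 p23 z1 z2 *m mxl 2 6 [:: [:: (- a23 * l23 - a22 * l22 - a21 * l21); (z1 + a13 * l23 + a12 * l22 + a11 * l21); 0; 0; 0; 0];
    [:: (- z1 + a23 * l13 + a22 * l12 + a21 * l11); (- a13 * l13 - a12 * l12 - a11 * l11); 0; 0; 0; 0]] + mxl 6 5 [:: [:: 0; 0; 0; 0; 0];
    [:: 0; 0; 0; 0; 0];
    [:: (- z1 + a23 * l13 + a22 * l12 + a21 * l11 - a13 * l23 - a12 * l22 - a11 * l21); (a13 * a22 - a12 * a23); (- a13 * a21 + a11 * a23); (a12 * a21 - a11 * a22); 0];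
    [:: (l13 * l22 - l12 * l23); (z1 - a21 * l11 + a11 * l21); (- a21 * l12 + a11 * l22); (- a21 * l13 + a11 * l23); 0];
    [:: (- l13 * l21 + l11 * l23); (- a22 * l11 + a12 * l21); (z1 - a22 * l12 + a12 * l22); (- a22 * l13 + a12 * l23); 0];
    [:: (l12 * l21 - l11 * l22); (- a23 * l11 + a13 * l21); (- a23 * l12 + a13 * l22); (z1 - a23 * l13 + a13 * l23); 0]] *m q2 a11 a12 a13 a21 a22 a23 l11 l12 l13 l21 l22 l23 p12 p13 p23 z1 z2 = (- z1 * z1 + a23 * l13 * z1 + a22 * l12 * z1 + a21 * l11 * z1 - a13 * l23 * z1 - a13 * a22 * l13 * l22 + a13 * a22 * l12 * l23 - a13 * a21 * l13 * l21 + a13 * a21 * l11 * l23 - a12 * l22 * z1 + a12 * a23 * l13 * l22 - a12 * a23 * l12 * l23 - a12 * a21 * l12 * l21 + a12 * a21 * l11 * l22 - a11 * l21 * z1 + a11 * a23 * l13 * l21 - a11 * a23 * l11 * l23 + a11 * a22 * l12 * l21 - a11 * a22 * l11 * l22) *: 1%:M.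
Proof. apply/matrixP => i j; rewrite /q3 /q2 /mxl; crunch; ordcase i; ordcase j; crunch; ring. Qed.

Lemma homC4 (R : comPzRingType) (a11 a12 a13 a21 a22 a23 l11 l12 l13 l21 l22 l23 p12 p13 p23 z1 z2 : R) :
  q2 a11 a12 a13 a21 a22 a23 l11 l12 l13 l21 l22 l23 p12 p13 p23 z1 z2 *m mxl 6 5 [:: [:: 0; 0; 0; 0; 0];
    [:: 0; 0; 0; 0; 0];
    [:: (- z1 + a23 * l13 + a22 * l12 + a21 * l11 - a13 * l23 - a12 * l22 - a11 * l21); (a13 * a22 - a12 * a23); (- a13 * a21 + a11 * a23); (a12 * a21 - a11 * a22); 0];
    [:: (l13 * l22 - l12 * l23); (z1 - a21 * l11 + a11 * l21); (- a21 * l12 + a11 * l22); (- a21 * l13 + a11 * l23); 0];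
    [:: (- l13 * l21 + l11 * l23); (- a22 * l11 + a12 * l21); (z1 - a22 * l12 + a12 * l22); (- a22 * l13 + a12 * l23); 0];
    [:: (l12 * l21 - l11 * l22); (- a23 * l11 + a13 * l21); (- a23 * l12 + a13 * l22); (z1 - a23 * l13 + a13 * l23); 0]] + mxl 5 1 [:: [:: 0];
    [:: 0];
    [:: 0];
    [:: 0];
    [:: (1)]] *m q1 a11 a12 a13 a21 a22 a23 l11 l12 l13 l21 l22 l23 p12 p13 p23 z1 z2 = (- z1 * z1 + a23 * l13 * z1 + a22 * l12 * z1 + a21 * l11 * z1 - a13 * l23 * z1 - a13 * a22 * l13 * l22 + a13 * a22 * l12 * l23 - a13 * a21 * l13 * l21 + a13 * a21 * l11 * l23 - a12 * l22 * z1 + a12 * a23 * l13 * l22 - a12 * a23 * l12 * l23 - a12 * a21 * l12 * l21 + a12 * a21 * l11 * l22 - a11 * l21 * z1 + a11 * a23 * l13 * l21 - a11 * a23 * l11 * l23 + a11 * a22 * l12 * l21 - a11 * a22 * l11 * l22) *: 1%:M.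
Proof. apply/matrixP => i j; rewrite Q1E /q2 /mxl; crunch; ordcase i; ordcase j; crunch; ring. Qed.

Lemma annk0 (R : comPzRingType) (a11 a12 a13 a21 a22 a23 l11 l12 l13 l21 l22 l23 p12 p13 p23 z1 z2 : R) : ann (q1 a11 a12 a13 a21 a22 a23 l11 l12 l13 l21 l22 l23 p12 p13 p23 z1 z2) (q2 a11 a12 a13 a21 a22 a23 l11 l12 l13 l21 l22 l23 p12 p13 p23 z1 z2) (q3 a11 a12 a13 a21 a22 a23 l11 l12 l13 l21 l22 l23 p12 p13 p23 z1 z2) (- z1 * z2 + l13 * l22 * p23 + l13 * l21 * p13 - l12 * l23 * p23 + l12 * l21 * p12 - l11 * l23 * p13 - l11 * l22 * p12 + a23 * l13 * z2 + a22 * l12 * z2 + a21 * l11 * z2 - a13 * l23 * z2 - a12 * l22 * z2 - a11 * l21 * z2).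
Proof. apply: ann_of_hom; [exact: homA0 | exact: homB0 | exact: homC0]. Qed.

Lemma annk1 (R : comPzRingType) (a11 a12 a13 a21 a22 a23 l11 l12 l13 l21 l22 l23 p12 p13 p23 z1 z2 : R) : ann (q1 a11 a12 a13 a21 a22 a23 l11 l12 l13 l21 l22 l23 p12 p13 p23 z1 z2) (q2 a11 a12 a13 a21 a22 a23 l11 l12 l13 l21 l22 l23 p12 p13 p23 z1 z2) (q3 a11 a12 a13 a21 a22 a23 l11 l12 l13 l21 l22 l23 p12 p13 p23 z1 z2) (p23 * z1 - a23 * l11 * p12 + a22 * l11 * p13 - a21 * l11 * p23 + a13 * l21 * p12 + a13 * a22 * z2 - a12 * l21 * p13 - a12 * a23 * z2 + a11 * l21 * p23).
Proof. apply: ann_of_hom; [exact: homA1 | exact: homB1 | exact: homC1]. Qed.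

Lemma annk2 (R : comPzRingType) (a11 a12 a13 a21 a22 a23 l11 l12 l13 l21 l22 l23 p12 p13 p23 z1 z2 : R) : ann (q1 a11 a12 a13 a21 a22 a23 l11 l12 l13 l21 l22 l23 p12 p13 p23 z1 z2) (q2 a11 a12 a13 a21 a22 a23 l11 l12 l13 l21 l22 l23 p12 p13 p23 z1 z2) (q3 a11 a12 a13 a21 a22 a23 l11 l12 l13 l21 l22 l23 p12 p13 p23 z1 z2) (- p13 * z1 - a23 * l12 * p12 + a22 * l12 * p13 - a21 * l12 * p23 + a13 * l22 * p12 - a13 * a21 * z2 - a12 * l22 * p13 + a11 * l22 * p23 + a11 * a23 * z2).
Proof. apply: ann_of_hom; [exact: homA2 | exact: homB2 | exact: homC2]. Qed.

Lemma annk3 (R : comPzRingType) (a11 a12 a13 a21 a22 a23 l11 l12 l13 l21 l22 l23 p12 p13 p23 z1 z2 : R) : ann (q1 a11 a12 a13 a21 a22 a23 l11 l12 l13 l21 l22 l23 p12 p13 p23 z1 z2) (q2 a11 a12 a13 a21 a22 a23 l11 l12 l13 l21 l22 l23 p12 p13 p23 z1 z2) (q3 a11 a12 a13 a21 a22 a23 l11 l12 l13 l21 l22 l23 p12 p13 p23 z1 z2) (p12 * z1 - a23 * l13 * p12 + a22 * l13 * p13 - a21 * l13 * p23 + a13 * l23 * p12 - a12 * l23 * p13 + a12 * a21 * z2 + a11 * l23 * p23 - a11 * a22 * z2).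
Proof. apply: ann_of_hom; [exact: homA3 | exact: homB3 | exact: homC3]. Qed.

Lemma annk4 (R : comPzRingType) (a11 a12 a13 a21 a22 a23 l11 l12 l13 l21 l22 l23 p12 p13 p23 z1 z2 : R) : ann (q1 a11 a12 a13 a21 a22 a23 l11 l12 l13 l21 l22 l23 p12 p13 p23 z1 z2) (q2 a11 a12 a13 a21 a22 a23 l11 l12 l13 l21 l22 l23 p12 p13 p23 z1 z2) (q3 a11 a12 a13 a21 a22 a23 l11 l12 l13 l21 l22 l23 p12 p13 p23 z1 z2) (- z1 * z1 + a23 * l13 * z1 + a22 * l12 * z1 + a21 * l11 * z1 - a13 * l23 * z1 - a13 * a22 * l13 * l22 + a13 * a22 * l12 * l23 - a13 * a21 * l13 * l21 + a13 * a21 * l11 * l23 - a12 * l22 * z1 + a12 * a23 * l13 * l22 - a12 * a23 * l12 * l23 - a12 * a21 * l12 * l21 + a12 * a21 * l11 * l22 - a11 * l21 * z1 + a11 * a23 * l13 * l21 - a11 * a23 * l11 * l23 + a11 * a22 * l12 * l21 - a11 * a22 * l11 * l22).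
Proof. apply: ann_of_hom; [exact: homA4 | exact: homB4 | exact: homC4]. Qed.

Lemma ann_entry (R : comPzRingType) (a11 a12 a13 a21 a22 a23 l11 l12 l13 l21 l22 l23 p12 p13 p23 z1 z2 : R) (j : 'I_5) : ann (q1 a11 a12 a13 a21 a22 a23 l11 l12 l13 l21 l22 l23 p12 p13 p23 z1 z2) (q2 a11 a12 a13 a21 a22 a23 l11 l12 l13 l21 l22 l23 p12 p13 p23 z1 z2) (q3 a11 a12 a13 a21 a22 a23 l11 l12 l13 l21 l22 l23 p12 p13 p23 z1 z2) (q1 a11 a12 a13 a21 a22 a23 l11 l12 l13 l21 l22 l23 p12 p13 p23 z1 z2 ord0 j).
Proof.
have -> : q1 a11 a12 a13 a21 a22 a23 l11 l12 l13 l21 l22 l23 p12 p13 p23 z1 z2 ord0 j = mxl 1 5 [:: [:: (- z1 * z2 + l13 * l22 * p23 + l13 * l21 * p13 - l12 * l23 * p23 + l12 * l21 * p12 - l11 * l23 * p13 - l11 * l22 * p12 + a23 * l13 * z2 + a22 * l12 * z2 + a21 * l11 * z2 - a13 * l23 * z2 - a12 * l22 * z2 - a11 * l21 * z2); (p23 * z1 - a23 * l11 * p12 + a22 * l11 * p13 - a21 * l11 * p23 + a13 * l21 * p12 + a13 * a22 * z2 - a12 * l21 * p13 - a12 * a23 * z2 + a11 * l21 * p23); (- p13 * z1 - a23 * l12 * p12 + a22 * l12 * p13 - a21 * l12 * p23 + a13 * l22 * p12 - a13 * a21 * z2 - a12 * l22 * p13 + a11 * l22 * p23 + a11 * a23 *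 z2); (p12 * z1 - a23 * l13 * p12 + a22 * l13 * p13 - a21 * l13 * p23 + a13 * l23 * p12 - a12 * l23 * p13 + a12 * a21 * z2 + a11 * l23 * p23 - a11 * a22 * z2); (- z1 * z1 + a23 * l13 * z1 + a22 * l12 * z1 + a21 * l11 * z1 - a13 * l23 * z1 - a13 * a22 * l13 * l22 + a13 * a22 * l12 * l23 - a13 * a21 * l13 * l21 + a13 * a21 * l11 * l23 - a12 * l22 * z1 + a12 * a23 * l13 * l22 - a12 * a23 * l12 * l23 - a12 * a21 * l12 * l21 + a12 * a21 * l11 * l22 - a11 * l21 * z1 + a11 * a23 * l13 * l21 - a11 * a23 * l11 * l23 + a11 * a22 * l12 * l21 - a11 * a22 * l11 * l22)]] ord0 j by rewrite Q1E.
rewrite /mxl mxE; ordcase j.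
- exact: annk0. - exact: annk1. - exact: annk2. - exact: annk3. - exact: annk4.
Qed.

Lemma ann_ideal (R : comPzRingType) (a11 a12 a13 a21 a22 a23 l11 l12 l13 l21 l22 l23 p12 p13 p23 z1 z2 : R) x :
  in_ideal [seq q1 a11 a12 a13 a21 a22 a23 l11 l12 l13 l21 l22 l23 p12 p13 p23 z1 z2 ord0 j | j <- enum 'I_5] x ->
  ann (q1 a11 a12 a13 a21 a22 a23 l11 l12 l13 l21 l22 l23 p12 p13 p23 z1 z2) (q2 a11 a12 a13 a21 a22 a23 l11 l12 l13 l21 l22 l23 p12 p13 p23 z1 z2) (q3 a11 a12 a13 a21 a22 a23 l11 l12 l13 l21 l22 l23 p12 p13 p23 z1 z2) x.
Proof.
move=> [c ->]; apply: big_ind.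
- exact: ann0.
- by move=> ? ?; apply: annD.
move=> i _; apply: annM.
have : [seq q1 a11 a12 a13 a21 a22 a23 l11 l12 l13 l21 l22 l23 p12 p13 p23 z1 z2 ord0 j | j <- enum 'I_5]`_i \in [seq q1 a11 a12 a13 a21 a22 a23 l11 l12 l13 l21 l22 l23 p12 p13 p23 z1 z2 ord0 j | j <- enum 'I_5].
  by apply: mem_nth.
by case/mapP => j _ ->; apply: ann_entry.
Qed.

Theorem theorem3p5 (R : comPzRingType)
  (a11 a12 a13 a21 a22 a23 l11 l12 l13 l21 l22 l23 p12 p13 p23 z1 z2 : R) :
  noetherian R ->
  let Q1 := q1 a11 a12 a13 a21 a22 a23 l11 l12 l13 l21 l22 l23 p12 p13 p23 z1 z2 in
  let Q2 := q2 a11 a12 a13 a21 a22 a23 l11 l12 l13 l21 l22 l23 p12 p13 p23 z1 z2 in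
  let Q3 := q3 a11 a12 a13 a21 a22 a23 l11 l12 l13 l21 l22 l23 p12 p13 p23 z1 z2 in
  [/\ Q1 *m Q2 = 0, Q2 *m Q3 = 0 &
      grade_ge (in_ideal [seq Q1 ord0 j | j <- enum 'I_5]) 3 ->
      acyclic3 Q1 Q2 Q3].
Proof.
move=> _ Q1 Q2 Q3.
have d12 : Q1 *m Q2 = 0.
  apply/matrixP => i j; rewrite /Q1 /Q2 Q1E /q2 /mxl; crunch; ordcase i; ordcase j; crunch; ring.
have d23 : Q2 *m Q3 = 0.
  apply/matrixP => i j; rewrite /Q2 /Q3 /q3 /q2 /mxl; crunch; ordcase i; ordcase j; crunch; ring.
split=> // -[s [Hs HI W]].
case: s Hs HI W => [|x1 [|x2 [|x3 [|? ?]]]] // _ HI W.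
apply: (abstract_acyclic d12 d23 W); apply: ann_ideal; apply: HI; rewrite !inE eqxx ?orbT //.
Qed.
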